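(* Let $(X,\mathcal{A},\mu)$ be a $q$-measure space, let $A_1,\dots,A_n\in\mathcal{A}$ be mutually disjoint, let $0<\alpha_1<\alpha_2<\dots<\alpha_n$, and let $f=\sum_{i=1}^n\alpha_i\chi_{A_i}$. Then \[ \int f\,d\mu=\sum_{k=1}^{n-1}\alpha_k\Big[\sum_{j=k+1}^n\mu(A_k\cup A_j)-(n-k-1)\mu(A_k)-\sum_{j=k+1}^n\mu(A_j)\Big]+\alpha_n\mu(A_n). \] Equivalently, with $\alpha_0=0$, $\int f\,d\mu=\sum_{k=1}^n(\alpha_k-\alpha_{k-1})\,\mu(A_k\cup\dots\cup A_n)$.
   Context: A $q$-measure space is a triple $(X,\mathcal{A},\mu)$ where $\mathcal{A}$ is a $\sigma$-algebra of subsets of $X$ and $\mu\colon\mathcal{A}\to[0,\infty)$ satisfies: (i) grade-2 additivity: $\mu(A\cup B\cup C)=\mu(A\cup B)+\mu(A\cup C)+\mu(B\cup C)-\mu(A)-\mu(B)-\mu(C)$ for mutually disjoint $A,B,C\in\mathcal{A}$; (ii) if $A_i\in\mathcal{A}$ is increasing then $\mu(\bigcup A_i)=\lim\mu(A_i)$; (iii) if $A_i\in\mathcal{A}$ is decreasing then $\mu(\bigcap A_i)=\lim\mu(A_i)$. $\chi_A$ denotes the characteristic function of $A$. For measurable $f\colon X\to\mathbb{R}$, $f$ is called $\mu$-integrable if $\lambda\mapsto\mu(f^{-1}(\lambda,\infty))$ and $\lambda\mapsto\mu(f^{-1}(-\infty,-\lambda))$ have finite Lebesgue integral over $[0,\infty)$,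 and then the $q$-integral is $\int f\,d\mu=\int_0^\infty\mu(f^{-1}(\lambda,\infty))\,d\lambda-\int_0^\infty\mu(f^{-1}(-\infty,-\lambda))\,d\lambda$. *)

(* Defs.v *)
From Stdlib Require Import Reals List Classical ClassicalEpsilon.
Open Scope R_scope.

Definition setU {X : Type} (A B : X -> Prop) : X -> Prop := fun x => A x \/ B x.
Definition setI {X : Type} (A B : X -> Prop) : X -> Prop := fun x => A x /\ B x.
Definition setC {X : Type} (A : X -> Prop) : X -> Prop := fun x => ~ A x.
Definition setT {X : Type} : X -> Prop := fun _ => True.
Definition bigcup {X : Type} (A : nat -> X -> Prop) : X -> Prop :=
  fun x => exists i, A i x.
Definition bigcap {X : Type} (A : nat -> X -> Prop) : X -> Prop :=
  fun x => forall i, A i x.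

Definition sigma_algebra {X : Type} (S : (X -> Prop) -> Prop) : Prop :=
  S setT /\
  (forall A, S A -> S (setC A)) /\
  (forall A : nat -> X -> Prop, (forall i, S (A i)) -> S (bigcup A)).

Definition increasing_sets {X : Type} (A : nat -> X -> Prop) : Prop :=
  forall i x, A i x -> A (S i) x.
Definition decreasing_sets {X : Type} (A : nat -> X -> Prop) : Prop :=
  forall i x, A (S i) x -> A i x.

Definition q_measure {X : Type} (S : (X -> Prop) -> Prop) (mu : (X -> Prop) -> R)
  : Prop :=
  sigma_algebra S /\
  (forall A, S A -> 0 <= mu A) /\
  (* grade-2 additivity *)
  (forall A B C, S A -> S B -> S C ->
     (forall x, A x -> B x -> False) ->
     (forall x, A x -> C x -> False) ->
     (forall x, B x -> C x -> False) ->
     mu (setU (setU A B) C) =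
       mu (setU A B) + mu (setU A C) + mu (setU B C) - mu A - mu B - mu C) /\
  (forall A : nat -> X -> Prop, (forall i, S (A i)) -> increasing_sets A ->
     Un_cv (fun i => mu (A i)) (mu (bigcup A))) /\
  (forall A : nat -> X -> Prop, (forall i, S (A i)) -> decreasing_sets A ->
     Un_cv (fun i => mu (A i)) (mu (bigcap A))).

Definition chi {X : Type} (A : X -> Prop) (x : X) : R :=
  if excluded_middle_informative (A x) then 1 else 0.

(* Sum a b g = g a + g (a+1) + ... + g b  (0 if b < a) *)
Definition Sum (a b : nat) (g : nat -> R) : R :=
  fold_right (fun j acc => g j + acc) 0 (seq a (S b - a)).

Definition has_integral_0_inf (g : R -> R) (l : R) : Prop :=
  (forall b, 0 <= b -> inhabited (Riemann_integrable g 0 b)) /\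
  (forall eps, 0 < eps -> exists B, forall b (pr : Riemann_integrable g 0 b),
      B <= b -> Rabs (RiemannInt pr - l) < eps).

Definition q_integral_is {X : Type} (mu : (X -> Prop) -> R) (f : X -> R) (I : R)
  : Prop :=
  exists l1 l2,
    has_integral_0_inf (fun lam => mu (fun x => lam < f x)) l1 /\
    has_integral_0_inf (fun lam => mu (fun x => f x < - lam)) l2 /\
    I = l1 - l2.

(* Main.v *)
Require Import Defs.
From Stdlib Require Import Reals List Classical ClassicalEpsilon Lra Lia.
From Stdlib Require Import FunctionalExtensionality PropExtensionality.
From Coquelicot Require Import Coquelicot.
Open Scope R_scope.

Lemma pe {X : Type} (P Q : X -> Prop) : (forall x, P x <-> Q x) -> P = Q.
Proof. intro H; apply functional_extensionality; intro x; apply propositional_extensionality; auto. Qed.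

Lemma fold_shift (g : nat -> R) c l :
  fold_right (fun j acc => g j + acc) c l = fold_right (fun j acc => g j + acc) 0 l + c.
Proof. induction l; simpl; [lra| rewrite IHl; lra]. Qed.

Lemma Sum_S a b g : (a <= S b)%nat -> Sum a (S b) g = Sum a b g + g (S b).
Proof.
  intro H; unfold Sum. replace (S (S b) - a)%nat with (S (S b - a))%nat by lia.
  rewrite seq_S, fold_right_app. cbn [fold_right]. replace (a + (S b - a))%nat with (S b) by lia.
  rewrite fold_shift. lra.
Qed.

Lemma Sum_nil a b g : (b < a)%nat -> Sum a b g = 0.
Proof. intro H; unfold Sum. replace (S b - a)%nat with 0%nat by lia. reflexivity. Qed.

Lemma Sum_ext a b g h : (forall i, (a <= i <= b)%nat -> g i = h i) -> Sum a b g = Sum a b h.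
Proof.
  intro H; unfold Sum.
  assert (forall i, In i (seq a (S b - a)) -> g i = h i).
  { intros i Hi. apply in_seq in Hi. apply H. lia. }
  clear H. induction (seq a (S b - a)); simpl; auto.
  rewrite IHl. rewrite (H0 a0). auto. left; auto. intros; apply H0; right; auto.
Qed.

Lemma Sum_minus a b g h : Sum a b (fun i => g i - h i) = Sum a b g - Sum a b h.
Proof. unfold Sum. induction (seq a (S b - a)); simpl; lra. Qed.

Lemma Sum_zero a b h : (forall i, (a <= i <= b)%nat -> h i = 0) -> Sum a b h = 0.
Proof.
  intro H. rewrite (Sum_ext a b h (fun _ => 0)) by auto. unfold Sum.
  induction (seq a (S b - a)); simpl; lra.
Qed.

Lemma Sum_single a b j h : (a <= j <= b)%nat ->
  (forall i, (a <= i <= b)%nat -> i <> j -> h i = 0) -> Sum a b h = h j.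
Proof.
  induction b; intros Hj Hz.
  - assert (a = 0%nat /\ j = 0%nat) as [-> ->] by lia. unfold Sum; simpl; lra.
  - rewrite Sum_S by lia. destruct (Nat.eq_dec j (S b)) as [->|Hne].
    + rewrite Sum_zero. lra. intros i Hi; apply Hz; lia.
    + rewrite IHb by (lia || (intros; apply Hz; lia)). rewrite (Hz (S b)) by lia. lra.
Qed.

Definition U {X : Type} (A : nat -> X -> Prop) (l h : nat) : X -> Prop :=
  fun x => exists j, (l <= j <= h)%nat /\ A j x.

Lemma mu_empty {X : Type} (Sig : (X -> Prop) -> Prop) mu :
  q_measure Sig mu -> mu (fun _ : X => False) = 0.
Proof.
  intros [[HT [HC HU]] [_ [H2 _]]].
  assert (HE : Sig (fun _ : X => False)).
  { replace (fun _ : X => False) with (setC (@setT X)). apply HC, HT.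
    apply pe. unfold setC, setT. tauto. }
  assert (E : setU (fun _ : X => False) (fun _ => False) = (fun _ => False)).
  { apply pe. unfold setU. tauto. }
  pose proof (H2 _ _ _ HE HE HE (fun _ h _ => h) (fun _ h _ => h) (fun _ h _ => h)) as K.
  rewrite !E in K. lra.
Qed.

Lemma Sig_union {X : Type} (Sig : (X -> Prop) -> Prop) (B C : X -> Prop) :
  sigma_algebra Sig -> Sig B -> Sig C -> Sig (setU B C).
Proof.
  intros [HT [HC HU]] HB HCC.
  replace (setU B C) with (bigcup (fun i => match i with 0%nat => B | _ => C end)).
  - apply HU. intros [|i]; auto.
  - apply pe. intro x. unfold bigcup, setU. split.
    + intros [[|i] H]; auto.
    + intros [H|H]. exists 0%nat; auto. exists 1%nat; auto.
Qed.

Lemma Sig_U {X : Type} (Sig : (X -> Prop) -> Prop) (A : nat -> X -> Prop) l :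
  sigma_algebra Sig -> (1 <= l)%nat -> forall h,
  (forall j, (l <= j <= h)%nat -> Sig (A j)) -> Sig (U A l h).
Proof.
  intros HS Hl. pose proof HS as [HT [HC HU]].
  assert (HE : Sig (fun _ : X => False)).
  { replace (fun _ : X => False) with (setC (@setT X)). apply HC, HT.
    apply pe. unfold setC, setT. tauto. }
  induction h; intros HA.
  - replace (U A l 0) with (fun _ : X => False); auto.
    apply pe. unfold U. split; [tauto| intros [j [Hj _]]; lia].
  - destruct (Compare_dec.le_lt_dec l (S h)) as [Hle|Hlt].
    + replace (U A l (S h)) with (setU (U A l h) (A (S h))).
      * apply Sig_union; auto. apply IHh. intros; apply HA; lia.
      * apply pe. unfold U, setU. intro x; split.
        -- intros [[j [Hj Hx]]|Hx]. exists j; split; auto; lia. exists (S h); split; auto; lia.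
        -- intros [j [Hj Hx]]. destruct (Nat.eq_dec j (S h)) as [->|Hn]. right; auto.
           left; exists j; split; auto; lia.
    + replace (U A l (S h)) with (fun _ : X => False); auto.
      apply pe. unfold U. split; [tauto| intros [j [Hj _]]; lia].
Qed.

Lemma lemL {X : Type} (Sig : (X -> Prop) -> Prop) mu (A : nat -> X -> Prop) n :
  q_measure Sig mu ->
  (forall i, (1 <= i <= n)%nat -> Sig (A i)) ->
  (forall i j, (1 <= i <= n)%nat -> (1 <= j <= n)%nat -> i <> j ->
             forall x, A i x -> A j x -> False) ->
  forall k h, (1 <= k)%nat -> (k < h)%nat -> (h <= n)%nat ->
  mu (U A k h) - mu (U A (S k) h) =
  Sum (S k) h (fun j => mu (setU (A k) (A j)) - mu (A j)) - INR (h - k - 1) * mu (A k).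
Proof.
  intros Hmu HA Hdisj k h Hk. pose proof Hmu as [HS [_ [H2 _]]].
  induction h; intros Hkh Hhn; [lia|].
  destruct (Nat.eq_dec h k) as [->|Hne].
  - replace (U A k (S k)) with (setU (A k) (A (S k))).
    2:{ apply pe; intro x; unfold U, setU; split.
        - intros [H|H]; [exists k|exists (S k)]; split; auto; lia.
        - intros [j [Hj Hx]]. destruct (Nat.eq_dec j k) as [->|]; auto.
          right; replace (S k) with j by lia; auto. }
    replace (U A (S k) (S k)) with (A (S k)).
    2:{ apply pe; intro x; unfold U; split.
        - intros H; exists (S k); split; auto; lia.
        - intros [j [Hj Hx]]. replace (S k) with j by lia; auto. }
    rewrite (Sum_single _ _ (S k)) by (lia || (intros; lia)).
    replace (S k - k - 1)%nat with 0%nat by lia. simpl. lra.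
  - assert (IH := IHh ltac:(lia) ltac:(lia)).
    set (B := U A (S k) h) in *.
    assert (E1 : U A k (S h) = setU (setU (A k) B) (A (S h))).
    { apply pe; intro x; unfold U, setU, B; split.
      - intros [j [Hj Hx]]. destruct (Nat.eq_dec j k) as [->|]. left; left; auto.
        destruct (Nat.eq_dec j (S h)) as [->|]. right; auto.
        left; right; exists j; split; auto; lia.
      - intros [[H|[j [Hj H]]]|H]; [exists k|exists j|exists (S h)]; split; auto; lia. }
    assert (E2 : U A k h = setU (A k) B).
    { apply pe; intro x; unfold U, setU, B; split.
      - intros [j [Hj Hx]]. destruct (Nat.eq_dec j k) as [->|]. left; auto.
        right; exists j; split; auto; lia.
      - intros [H|[j [Hj H]]]; [exists k|exists j]; split; auto; lia. }
    assert (E3 : U A (S k) (S h) = setU B (A (S h))).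
    { apply pe; intro x; unfold U, setU, B; split.
      - intros [j [Hj Hx]]. 
        destruct (Nat.eq_dec j (S h)) as [->|]. right; auto.
        left; exists j; split; auto; lia.
      - intros [[j [Hj H]]|H]; [exists j|exists (S h)]; split; auto; lia. }
    rewrite E1, E3. rewrite E2 in IH.
    rewrite H2.
    + rewrite Sum_S by lia.
      replace (S h - k - 1)%nat with (S (h - k - 1)) by lia. rewrite S_INR. lra.
    + apply HA; lia.
    + apply Sig_U; auto; try lia. intros; apply HA; lia.
    + apply HA; lia.
    + intros x H1 [j [Hj H3]]. apply (Hdisj k j) with x; auto; lia.
    + intros x H1 H3. apply (Hdisj k (S h)) with x; auto; lia.
    + intros x [j [Hj H1]] H3. apply (Hdisj j (S h)) with x; auto; lia.
Qed.

Lemma abel (a D : nat -> R) m : (1 <= m)%nat ->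
  Sum 1 m (fun k => a k * (D k - D (S k))) =
  Sum 1 m (fun k => (a k - (if Nat.eqb k 1 then 0 else a (k - 1)%nat)) * D k) - a m * D (S m).
Proof.
  induction m; intro Hm; [lia|].
  destruct m.
  - unfold Sum; simpl. lra.
  - rewrite !(Sum_S 1 (S m)) by lia. rewrite IHm by lia.
    replace (Nat.eqb (S (S m)) 1) with false by reflexivity.
    replace (S (S m) - 1)%nat with (S m) by lia. lra.
Qed.

Lemma alpha_mono (alpha : nat -> R) n :
  (forall i, (1 <= i < n)%nat -> alpha i < alpha (S i)) ->
  forall i j, (1 <= i)%nat -> (i < j)%nat -> (j <= n)%nat -> alpha i < alpha j.
Proof.
  intros H i j Hi Hij. induction j; [lia|]. intros Hj.
  destruct (Nat.eq_dec i j) as [->|]. apply H; lia.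
  apply Rlt_trans with (alpha j). apply IHj; lia. apply H; lia.
Qed.

Lemma alpha_le (alpha : nat -> R) n :
  (forall i, (1 <= i < n)%nat -> alpha i < alpha (S i)) ->
  forall i j, (1 <= i)%nat -> (i <= j)%nat -> (j <= n)%nat -> alpha i <= alpha j.
Proof.
  intros H i j Hi Hij Hj. destruct (Nat.eq_dec i j) as [->|]. lra.
  left; apply (alpha_mono alpha n); auto; lia.
Qed.

Lemma fval {X : Type} (A : nat -> X -> Prop) (alpha : nat -> R) n
  (Hdisj : forall i j, (1 <= i <= n)%nat -> (1 <= j <= n)%nat -> i <> j ->
             forall x, A i x -> A j x -> False) x :
  (exists j, (1 <= j <= n)%nat /\ A j x /\
     Sum 1 n (fun i => alpha i * chi (A i) x) = alpha j) \/
  ((forall j, (1 <= j <= n)%nat -> ~ A j x) /\ Sum 1 n (fun i => alpha i * chi (A i) x) = 0).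
Proof.
  destruct (classic (exists j, (1 <= j <= n)%nat /\ A j x)) as [[j [Hj Hx]]|Hn].
  - left. exists j. split; auto. split; auto.
    rewrite (Sum_single _ _ j); auto.
    + unfold chi. destruct (excluded_middle_informative (A j x)); [lra|tauto].
    + intros i Hi Hij. unfold chi. destruct (excluded_middle_informative (A i x)); [|lra].
      exfalso; apply (Hdisj i j Hi Hj Hij x); auto.
  - right. split. intros j Hj Hx; apply Hn; eauto.
    apply Sum_zero. intros i Hi. unfold chi. destruct (excluded_middle_informative (A i x)); [|lra].
    exfalso; apply Hn; eauto.
Qed.

Section S.
Context {X : Type} (A : nat -> X -> Prop) (alpha : nat -> R) (n : nat)
  (Hn : (1 <= n)%nat)
  (Hdisj : forall i j, (1 <= i <= n)%nat -> (1 <= j <= n)%nat -> i <> j ->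
             forall x, A i x -> A j x -> False)
  (Halpha1 : 0 < alpha 1%nat)
  (Halpha : forall i, (1 <= i < n)%nat -> alpha i < alpha (S i)).

Let f := fun x => Sum 1 n (fun i => alpha i * chi (A i) x).

Lemma alpha_pos i : (1 <= i <= n)%nat -> 0 < alpha i.
Proof.
  intro Hi. destruct (Nat.eq_dec i 1) as [->|]; auto.
  apply Rlt_trans with (alpha 1%nat); auto. apply (alpha_mono alpha n); auto; lia.
Qed.

Lemma level_mid k lam : (1 <= k <= n)%nat ->
  (if Nat.eqb k 1 then 0 else alpha (k - 1)%nat) < lam < alpha k ->
  (fun x => lam < f x) = U A k n.
Proof.
  intros Hk Hl. apply pe; intro x. unfold U, f.
  destruct (fval A alpha n Hdisj x) as [[j [Hj [Hx Hf]]]|[Hn' Hf]]; rewrite Hf.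
  - split.
    + intro Hl2. exists j. split; auto. split; [|lia].
      destruct (Compare_dec.le_lt_dec k j); auto.
      destruct (Nat.eqb_spec k 1) as [->|Hk1]; [lia|].
      pose proof (alpha_le alpha n Halpha j (k-1) ltac:(lia) ltac:(lia) ltac:(lia)). lra.
    + intros [j' [Hj' Hx']]. destruct (Nat.eq_dec j j') as [<-|Hne].
      * pose proof (alpha_le alpha n Halpha k j ltac:(lia) ltac:(lia) ltac:(lia)). lra.
      * exfalso; apply (Hdisj j j' Hj ltac:(lia) Hne x); auto.
  - split.
    + intro H. exfalso. destruct (Nat.eqb_spec k 1) as [->|Hk1]; [lra|].
      pose proof (alpha_pos (k-1) ltac:(lia)). lra.
    + intros [j' [Hj' Hx']]. exfalso; apply (Hn' j'); auto; lia.
Qed.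

Lemma level_top lam : alpha n < lam -> (fun x => lam < f x) = (fun _ => False).
Proof.
  intros Hl. apply pe; intro x. unfold f. split; [|tauto]. intro H.
  destruct (fval A alpha n Hdisj x) as [[j [Hj [Hx Hf]]]|[Hn' Hf]]; rewrite Hf in H.
  - pose proof (alpha_le alpha n Halpha j n ltac:(lia) ltac:(lia) ltac:(lia)). lra.
  - pose proof (alpha_pos n ltac:(lia)). lra.
Qed.

Lemma level_neg lam : 0 < lam -> (fun x => f x < - lam) = (fun _ => False).
Proof.
  intros Hl. apply pe; intro x. unfold f. split; [|tauto]. intro H.
  destruct (fval A alpha n Hdisj x) as [[j [Hj [Hx Hf]]]|[Hn' Hf]]; rewrite Hf in H.
  - pose proof (alpha_pos j Hj). lra.
  - lra.
Qed.

End S.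

Lemma is_RInt_const' a b (v : R) : is_RInt (fun _ => v) a b ((b-a)*v).
Proof. exact (is_RInt_const a b v). Qed.

Lemma is_RInt_Chasles' (g : R -> R) a b c l1 l2 :
  is_RInt g a b l1 -> is_RInt g b c l2 -> is_RInt g a c (l1 + l2).
Proof. exact (is_RInt_Chasles g a b c l1 l2). Qed.

Lemma has_int_of (g : R -> R) c (l : R) :
  0 <= c -> (forall b, c <= b -> is_RInt g 0 b l) -> has_integral_0_inf g l.
Proof.
  intros Hc H. split.
  - intros b Hb. constructor. apply ex_RInt_Reals_0.
    apply (ex_RInt_Chasles_1 g 0 b (Rmax b c)). split; auto. apply Rmax_l.
    exists l. apply H. apply Rmax_r.
  - intros eps He. exists c. intros b pr Hb.
    rewrite <- RInt_Reals. rewrite (is_RInt_unique _ _ _ _ (H b Hb)).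
    rewrite Rminus_diag, Rabs_R0. auto.
Qed.

Lemma int_m {X : Type} (Sig : (X -> Prop) -> Prop) mu (A : nat -> X -> Prop) (alpha : nat -> R) n
  (Hn : (1 <= n)%nat)
  (Hdisj : forall i j, (1 <= i <= n)%nat -> (1 <= j <= n)%nat -> i <> j ->
             forall x, A i x -> A j x -> False)
  (Halpha1 : 0 < alpha 1%nat)
  (Halpha : forall i, (1 <= i < n)%nat -> alpha i < alpha (S i)) :
  forall m, (1 <= m <= n)%nat ->
  is_RInt (fun lam => mu (fun x => lam < Sum 1 n (fun i => alpha i * chi (A i) x))) 0 (alpha m)
    (Sum 1 m (fun k => (alpha k - (if Nat.eqb k 1 then 0 else alpha (k - 1)%nat))
        * mu (U A k n))).
Proof.
  induction m as [|m IH]; intros Hm; [lia|].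
  destruct m as [|m].
  - replace (Sum 1 1 _) with ((alpha 1%nat - 0) * mu (U A 1 n)) by (unfold Sum; simpl; ring).
    eapply is_RInt_ext; [|apply is_RInt_const'].
    intros x Hx. rewrite Rmin_left, Rmax_right in Hx by lra.
    rewrite (level_mid A alpha n Hn Hdisj Halpha1 Halpha 1 x); [reflexivity|lia|simpl; lra].
  - rewrite Sum_S by lia.
    apply is_RInt_Chasles' with (alpha (S m)). apply IH; lia.
    replace (Nat.eqb (S (S m)) 1) with false by reflexivity.
    replace (S (S m) - 1)%nat with (S m) by lia.
    eapply is_RInt_ext; [|apply is_RInt_const'].
    pose proof (Halpha (S m) ltac:(lia)).
    intros x Hx. rewrite Rmin_left, Rmax_right in Hx by lra.
    rewrite (level_mid A alpha n Hn Hdisj Halpha1 Halpha (S (S m)) x); [reflexivity|lia|].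
    replace (Nat.eqb (S (S m)) 1) with false by reflexivity.
    replace (S (S m) - 1)%nat with (S m) by lia. lra.
Qed.

Theorem lemma4p2 (X : Type) (Sig : (X -> Prop) -> Prop) (mu : (X -> Prop) -> R)
  (Hmu : q_measure Sig mu)
  (n : nat) (Hn : (1 <= n)%nat)
  (A : nat -> X -> Prop) (alpha : nat -> R)
  (HA : forall i, (1 <= i <= n)%nat -> Sig (A i))
  (Hdisj : forall i j, (1 <= i <= n)%nat -> (1 <= j <= n)%nat -> i <> j ->
             forall x, A i x -> A j x -> False)
  (Halpha1 : 0 < alpha 1%nat)
  (Halpha : forall i, (1 <= i < n)%nat -> alpha i < alpha (S i)) :
  let f := fun x => Sum 1 n (fun i => alpha i * chi (A i) x) in
  q_integral_is mu f
    (Sum 1 (n - 1) (fun k =>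
        alpha k * (Sum (k + 1) n (fun j => mu (setU (A k) (A j)))
                   - INR (n - k - 1) * mu (A k)
                   - Sum (k + 1) n (fun j => mu (A j))))
     + alpha n * mu (A n))
  /\
  q_integral_is mu f
    (Sum 1 n (fun k =>
        (alpha k - (if Nat.eqb k 1 then 0 else alpha (k - 1)%nat))
        * mu (fun x => exists j, (k <= j <= n)%nat /\ A j x))).
Proof.
  intros f. subst f.
  set (V2 := Sum 1 n (fun k => (alpha k - (if Nat.eqb k 1 then 0 else alpha (k - 1)%nat))
        * mu (U A k n))).
  pose proof (mu_empty Sig mu Hmu) as Hemp.
  assert (HI : q_integral_is mu (fun x => Sum 1 n (fun i => alpha i * chi (A i) x)) V2).
  { exists V2, 0. split; [|split].
    - apply has_int_of with (alpha n).
      + left; apply (alpha_pos alpha n Hn Halpha1 Halpha); lia.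
      + intros b Hb. replace V2 with (V2 + (b - alpha n) * 0) by ring.
        apply is_RInt_Chasles' with (alpha n).
        * apply (int_m Sig mu A alpha n Hn Hdisj Halpha1 Halpha); lia.
        * eapply is_RInt_ext; [|apply is_RInt_const'].
          intros x Hx. rewrite Rmin_left, Rmax_right in Hx by lra.
          rewrite (level_top A alpha n Hn Hdisj Halpha1 Halpha x) by lra. auto.
    - apply has_int_of with 0. lra.
      intros b Hb. replace 0 with ((b - 0) * 0) at 2 by ring.
      eapply is_RInt_ext; [|apply is_RInt_const'].
      intros x Hx. rewrite Rmin_left, Rmax_right in Hx by lra.
      rewrite (level_neg A alpha n Hn Hdisj Halpha1 Halpha x) by lra. auto.
    - ring. }
  split; [|exact HI].
  set (D := fun k => mu (U A k n)).
  assert (E1 : Sum 1 (n - 1) (fun k =>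
        alpha k * (Sum (k + 1) n (fun j => mu (setU (A k) (A j)))
                   - INR (n - k - 1) * mu (A k)
                   - Sum (k + 1) n (fun j => mu (A j))))
     = Sum 1 (n - 1) (fun k => alpha k * (D k - D (S k)))).
  { apply Sum_ext. intros k Hk. unfold D.
    rewrite (lemL Sig mu A n Hmu HA Hdisj k n) by lia.
    rewrite Sum_minus, Nat.add_1_r. ring. }
  assert (E2 : mu (A n) = D n - D (S n)).
  { unfold D. replace (U A (S n) n) with (fun _ : X => False).
    2:{ apply pe. unfold U. split; [tauto|intros [j [Hj _]]; lia]. }
    replace (U A n n) with (A n). lra.
    apply pe. unfold U. intro x; split. intros; exists n; split; auto; lia.
    intros [j [Hj Hx]]. replace n with j by lia; auto. }
  rewrite E1, E2.
  replace (Sum 1 (n - 1) (fun k => alpha k * (D k - D (S k))) + alpha n * (D n - D (S n)))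
    with (Sum 1 n (fun k => alpha k * (D k - D (S k)))).
  2:{ destruct n as [|n']; [lia|]. replace (S n' - 1)%nat with n' by lia.
      rewrite Sum_S by lia. reflexivity. }
  rewrite abel by lia.
  assert (D (S n) = 0).
  { unfold D. rewrite <- Hemp. f_equal. apply pe. unfold U. split; [intros [j [Hj _]]; lia|tauto]. }
  rewrite H, Rmult_0_r, Rminus_0_r. exact HI.
Qed.
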